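(* Let $\{V_n:n\in\mathbb N\}$ be a family of pairwise disjoint countable subsets of the open square $(-1,1)^2$, and $\{W_n:n\in\mathbb N\}$ a family of pairwise disjoint subsets of $(-1,1)^2$, such that for each $n\in\mathbb N$ both $V_n$ and $W_n$ are dense in $[-1,1]^2$. Then for any $\lambda>1$ and any $\varepsilon>0$ there exists a $\lambda$-homeomorphism $h:[-1,1]^2\to[-1,1]^2$ such that $h|\partial [-1,1]^2=\mathrm{id}$, $d(h(x),x)<\varepsilon$ for every $x\in[-1,1]^2$, and $h(V_n)\subset W_n$ for every $n\in\mathbb N$.
   Context: $d$ is the Euclidean metric and $\partial[-1,1]^2$ is the boundary of the square. For $\lambda\ge1$, a bijection $h:X\to Y$ between metric spaces $(X,d)$, $(Y,\rho)$ is a $\lambda$-homeomorphism if $d(x,y)/\lambda\le \rho(h(x),h(y))\le\lambda d(x,y)$ for all $x,y\in X$. *)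

(* Defs.v *)
From Stdlib Require Import Reals.
Open Scope R_scope.

Definition pt := (R * R)%type.

Definition dist2 (p q : pt) : R :=
  sqrt ((fst p - fst q)^2 + (snd p - snd q)^2).

Definition closed_sq (p : pt) : Prop :=
  -1 <= fst p <= 1 /\ -1 <= snd p <= 1.
Definition open_sq (p : pt) : Prop :=
  -1 < fst p < 1 /\ -1 < snd p < 1.
Definition bd_sq (p : pt) : Prop := closed_sq p /\ ~ open_sq p.

Definition countable_set (A : pt -> Prop) : Prop :=
  exists f : pt -> nat, forall x y, A x -> A y -> f x = f y -> x = y.

Definition dense_in_sq (A : pt -> Prop) : Prop :=
  forall p, closed_sq p -> forall r, 0 < r -> exists a, A a /\ dist2 a p < r.

Definition pairwise_disjoint (F : nat -> pt -> Prop) : Prop :=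
  forall n m, n <> m -> forall x, F n x -> F m x -> False.

Definition lambda_homeo_sq (lam : R) (h : pt -> pt) : Prop :=
  (forall x, closed_sq x -> closed_sq (h x)) /\
  (forall x y, closed_sq x -> closed_sq y -> h x = h y -> x = y) /\
  (forall y, closed_sq y -> exists x, closed_sq x /\ h x = y) /\
  (forall x y, closed_sq x -> closed_sq y ->
     dist2 x y / lam <= dist2 (h x) (h y) /\ dist2 (h x) (h y) <= lam * dist2 x y).

(* Main.v *)
Require Import Defs.
From Stdlib Require Import Reals Lra Lia Rgeom ClassicalEpsilon ProofIrrelevance Classical Cantor.
From Coquelicot Require Import Coquelicot.
Open Scope R_scope.

Definition supn (x y : pt) : R := Rmax (Rabs (fst x - fst y)) (Rabs (snd x - snd y)).
Definition dd (x : pt) : R := Rmin (1 - Rabs (fst x)) (1 - Rabs (snd x)).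

Lemma supn_ge0 x y : 0 <= supn x y.
Proof. unfold supn. apply Rle_trans with (Rabs (fst x - fst y)); [apply Rabs_pos|apply Rmax_l]. Qed.

Lemma supn_fst x y : Rabs (fst x - fst y) <= supn x y.
Proof. apply Rmax_l. Qed.
Lemma supn_snd x y : Rabs (snd x - snd y) <= supn x y.
Proof. apply Rmax_r. Qed.

Lemma supn_sym x y : supn x y = supn y x.
Proof. unfold supn. rewrite (Rabs_minus_sym (fst x)), (Rabs_minus_sym (snd x)). reflexivity. Qed.

Lemma supn_triang x y z : supn x z <= supn x y + supn y z.
Proof.
  unfold supn at 1. apply Rmax_lub.
  - replace (fst x - fst z) with ((fst x - fst y) + (fst y - fst z)) by ring.
    eapply Rle_trans; [apply Rabs_triang|]. apply Rplus_le_compat; apply supn_fst.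
  - replace (snd x - snd z) with ((snd x - snd y) + (snd y - snd z)) by ring.
    eapply Rle_trans; [apply Rabs_triang|]. apply Rplus_le_compat; apply supn_snd.
Qed.

Lemma supn_self x : supn x x = 0.
Proof. unfold supn. rewrite !Rminus_diag, Rabs_R0. apply Rmax_left; lra. Qed.

Lemma supn_zero x y : supn x y = 0 -> x = y.
Proof.
  intros H. destruct x as [a b], y as [c d]. simpl in *.
  pose proof (supn_fst (a,b) (c,d)); pose proof (supn_snd (a,b) (c,d)). simpl in *.
  rewrite H in *. pose proof (Rabs_pos (a-c)); pose proof (Rabs_pos (b-d)).
  assert (Rabs (a - c) = 0) by lra. assert (Rabs (b-d) = 0) by lra.
  apply Rabs_eq_0 in H4. apply Rabs_eq_0 in H5. f_equal; lra.
Qed.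

Lemma abs_le_sqrt a b : Rabs a <= sqrt (a^2 + b^2).
Proof.
  rewrite <- sqrt_Rsqr_abs. apply sqrt_le_1_alt. unfold Rsqr. nra.
Qed.

Lemma supn_dist x y : supn x y <= dist2 x y.
Proof.
  unfold supn, dist2. apply Rmax_lub. apply abs_le_sqrt.
  rewrite Rplus_comm. apply abs_le_sqrt.
Qed.

Lemma dist2_triang x y z : dist2 x z <= dist2 x y + dist2 y z.
Proof.
  unfold dist2. pose proof (triangle (fst x) (snd x) (fst z) (snd z) (fst y) (snd y)) as H.
  unfold dist_euc, Rsqr in H. replace ((fst x - fst z)^2) with ((fst x - fst z) * (fst x - fst z)) by ring.
  replace ((snd x - snd z)^2) with ((snd x - snd z) * (snd x - snd z)) by ring.
  replace ((fst x - fst y)^2) with ((fst x - fst y) * (fst x - fst y)) by ring.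
  replace ((snd x - snd y)^2) with ((snd x - snd y) * (snd x - snd y)) by ring.
  replace ((fst y - fst z)^2) with ((fst y - fst z) * (fst y - fst z)) by ring.
  replace ((snd y - snd z)^2) with ((snd y - snd z) * (snd y - snd z)) by ring.
  exact H.
Qed.

Lemma dist2_sym x y : dist2 x y = dist2 y x.
Proof. unfold dist2. f_equal. ring. Qed.

Lemma dd_lip x v : dd v - supn x v <= dd x.
Proof.
  unfold dd. pose proof (supn_fst x v); pose proof (supn_snd x v).
  pose proof (Rabs_triang_inv (fst x) (fst v)). pose proof (Rabs_triang_inv (snd x) (snd v)).
  apply Rmin_glb.
  - pose proof (Rmin_l (1 - Rabs (fst v)) (1 - Rabs (snd v))). lra.
  - pose proof (Rmin_r (1 - Rabs (fst v)) (1 - Rabs (snd v))). lra.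
Qed.

Lemma dd_open x : open_sq x -> 0 < dd x.
Proof.
  unfold open_sq, dd. intros [[H1 H2] [H3 H4]]. apply Rmin_glb_lt.
  - unfold Rabs; destruct Rcase_abs; lra.
  - unfold Rabs; destruct Rcase_abs; lra.
Qed.

Lemma not_open_far x v : ~ open_sq x -> dd v <= supn x v.
Proof.
  intros H. unfold open_sq in H.
  pose proof (supn_fst x v); pose proof (supn_snd x v).
  pose proof (Rabs_triang_inv (fst x) (fst v)). pose proof (Rabs_triang_inv (snd x) (snd v)).
  pose proof (Rmin_l (1 - Rabs (fst v)) (1 - Rabs (snd v))).
  pose proof (Rmin_r (1 - Rabs (fst v)) (1 - Rabs (snd v))). unfold dd.
  destruct (Rle_dec 1 (Rabs (fst x))).
  - lra.
  - destruct (Rle_dec 1 (Rabs (snd x))).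
    + lra.
    + exfalso. apply H. revert n n0. unfold Rabs; repeat destruct Rcase_abs; intros; lra.
Qed.

Lemma ser_bound (a : nat -> R) (M : R) : 0 <= M ->
  (forall k, Rabs (a k) <= M * (/2)^(S k)) -> ex_series a /\ Rabs (Series a) <= M.
Proof.
  intros HM Ha.
  assert (Hb : is_series (fun k => M * (/2)^(S k)) M).
  { assert (Hg := is_series_geom (/2)). 
    assert (Rabs (/2) < 1) by (rewrite Rabs_pos_eq; lra).
    specialize (Hg H). apply (is_series_scal_l (M * /2)) in Hg.
    unfold scal in Hg; simpl in Hg; unfold mult in Hg; simpl in Hg.
    assert (E : M * / 2 * / (1 - / 2) = M) by field.
    rewrite E in Hg.
    eapply is_series_ext; [|exact Hg]. intros n. simpl. ring. }
  assert (Hab : ex_series (fun k => Rabs (a k))).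
  { apply (@ex_series_le R_AbsRing R_CompleteNormedModule) with (b := fun k => M * (/2)^(S k)).
    - intros n. unfold norm; simpl. unfold abs; simpl. rewrite Rabs_Rabsolu. apply Ha.
    - eexists; exact Hb. }
  split.
  - apply ex_series_Rabs; exact Hab.
  - eapply Rle_trans; [apply Series_Rabs; exact Hab|].
    rewrite <- (is_series_unique _ _ Hb). apply Series_le.
    + intros n; split; [apply Rabs_pos|apply Ha].
    + eexists; exact Hb.
Qed.

Fixpoint psum (f : nat -> R) (k : nat) : R :=
  match k with O => 0 | S k' => psum f k' + f k' end.

Lemma psum_ext f g k : (forall j, (j < k)%nat -> f j = g j) -> psum f k = psum g k.
Proof.
  induction k; intros H; simpl; auto.
  rewrite IHk by (intros; apply H; lia). rewrite H by lia. reflexivity.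
Qed.

Lemma psum_bound (a : nat -> R) M k : 0 <= M -> (forall j, Rabs (a j) <= M * (/2)^(S j)) ->
  Rabs (psum a k) <= M * (1 - (/2)^k).
Proof.
  intros HM Ha. induction k; simpl.
  - rewrite Rabs_R0. lra.
  - eapply Rle_trans; [apply Rabs_triang|]. specialize (Ha k). simpl in Ha.
    set (x := (/2)^k) in *. assert (M * (1 - / 2 * x) = M * (1 - x) + M * (/2 * x)) as E by field. lra.
Qed.

Lemma psum_series (a : nat -> R) k : (forall j, (k < j)%nat -> a j = 0) -> Series a = psum a (S k).
Proof.
  intros H. apply is_series_unique. apply is_series_Reals.
  assert (Hp : forall n, sum_f_R0 a n = psum a (S n)).
  { induction n; simpl. ring. simpl in IHn. rewrite IHn. reflexivity. }
  assert (Hs : forall n, (k <= n)%nat -> sum_f_R0 a n = psum a (S k)).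
  { intros n Hn. rewrite Hp. induction Hn.
    - reflexivity.
    - change (psum a (S (S m))) with (psum a (S m) + a (S m)). rewrite IHHn, H by lia. ring. }
  intros eps Heps. exists k. intros n Hn. rewrite Hs by lia. unfold R_dist.
  rewrite Rminus_diag, Rabs_R0. exact Heps.
Qed.

Lemma fixpt (T : pt -> pt) : (forall x y, supn (T x) (T y) <= /2 * supn x y) ->
  exists z, T z = z.
Proof.
  intros HT.
  set (s := fun n => Nat.iter n T (0,0)).
  set (D := supn (s 1%nat) (s 0%nat)).
  assert (HD : 0 <= D) by apply supn_ge0.
  assert (H1 : forall n, supn (s (S n)) (s n) <= D * (/2)^n).
  { induction n.
    - rewrite pow_O, Rmult_1_r. apply Rle_refl.
    - change (supn (T (s (S n))) (T (s n)) <= D * (/2)^(S n)).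
      eapply Rle_trans; [apply HT|]. rewrite <- tech_pow_Rmult.
      assert (D * (/ 2 * (/ 2) ^ n) = /2 * (D * (/2)^n)) as E by field. rewrite E. lra. }
  assert (H2 : forall n m, supn (s (n + m)%nat) (s n) <= 2 * D * (/2)^n - 2 * D * (/2)^(n+m)).
  { intros n m. induction m.
    - rewrite Nat.add_0_r, supn_self. lra.
    - eapply Rle_trans; [apply (supn_triang _ (s (n+m)%nat))|].
      replace (n + S m)%nat with (S (n+m)) by lia.
      pose proof (H1 (n+m)%nat). change (T (s (n+m)%nat)) with (s (S (n+m))).
      rewrite <- tech_pow_Rmult. set (y := (/2)^(n+m)) in *.
      assert (2 * D * (/ 2 * y) = D * y) as E by field. rewrite E. lra. }
  assert (H3 : forall n m, (n <= m)%nat -> supn (s m) (s n) <= 2 * D * (/2)^n).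
  { intros n m Hnm. replace m with (n + (m - n))%nat by lia.
    eapply Rle_trans; [apply H2|]. assert (0 <= (/2)^(n + (m-n))) by (apply pow_le; lra). nra. }
  assert (Hc : forall (pi : pt -> R), (forall x y, Rabs (pi x - pi y) <= supn x y) ->
             {l | Un_cv (fun n => pi (s n)) l}).
  { intros pi Hpi. apply Rcomplete.R_complete. intros eps Heps.
    destruct (pow_lt_1_zero (/2)) with (y := eps / (2 * D + 1)) as [N HN].
    { rewrite Rabs_pos_eq; lra. }
    { apply Rdiv_lt_0_compat; lra. }
    exists N. intros n m Hn Hm. unfold R_dist.
    assert (forall a b, (N <= a)%nat -> (a <= b)%nat -> Rabs (pi (s a) - pi (s b)) < eps).
    { intros a b Ha Hb. eapply Rle_lt_trans; [apply Hpi|]. rewrite supn_sym.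
      eapply Rle_lt_trans; [apply H3; exact Hb|].
      specialize (HN a Ha). rewrite Rabs_pos_eq in HN by (apply pow_le; lra).
      apply Rmult_lt_compat_l with (r := 2 * D + 1) in HN; [|lra].
      replace ((2 * D + 1) * (eps / (2 * D + 1))) with eps in HN by (field; lra).
      assert (0 <= (/2)^a) by (apply pow_le; lra). nra. }
    destruct (Nat.le_ge_cases n m).
    - apply H; auto.
    - rewrite Rabs_minus_sym. apply H; auto. }
  destruct (Hc fst) as [l1 Hl1]. { intros; apply supn_fst. }
  destruct (Hc snd) as [l2 Hl2]. { intros; apply supn_snd. }
  exists (l1, l2).
  assert (Hlim : forall eps, 0 < eps -> exists N, forall n, (n >= N)%nat -> supn (s n) (l1,l2) < eps).
  { intros eps Heps. destruct (Hl1 eps Heps) as [N1 HN1]. destruct (Hl2 eps Heps) as [N2 HN2].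
    exists (max N1 N2). intros n Hn. unfold supn; simpl. apply Rmax_lub_lt.
    - apply HN1; lia.
    - apply HN2; lia. }
  apply supn_zero. apply Rle_antisym; [|apply supn_ge0].
  apply Rnot_lt_le. intros Hpos.
  destruct (Hlim (supn (T (l1,l2)) (l1,l2) / 2)) as [N HN]; [lra|].
  pose proof (HN N (le_n _)). pose proof (HN (S N) (le_S _ _ (le_n _))).
  pose proof (supn_triang (T (l1,l2)) (s (S N)) (l1,l2)).
  assert (supn (T (l1, l2)) (s (S N)) <= /2 * supn (l1,l2) (s N)).
  { change (s (S N)) with (T (s N)). apply HT. }
  rewrite (supn_sym (l1,l2)) in H5. lra.
Qed.

Definition tent (c : pt) (r : R) (x : pt) : R := Rmax 0 (1 - supn x c / r).

Lemma tent_range c r x : 0 < r -> 0 <= tent c r x <= 1.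
Proof.
  intros Hr. unfold tent. split; [apply Rmax_l|]. apply Rmax_lub; [lra|].
  assert (0 <= supn x c / r) by (apply Rdiv_le_0_compat; [apply supn_ge0|lra]). lra.
Qed.

Lemma tent_far c r x : 0 < r -> r <= supn x c -> tent c r x = 0.
Proof.
  intros Hr H. unfold tent. apply Rmax_left.
  assert (1 <= supn x c / r).
  { apply Rmult_le_reg_r with r; [lra|]. unfold Rdiv. rewrite Rmult_assoc, Rinv_l; lra. }
  lra.
Qed.

Lemma tent_center c r : tent c r c = 1.
Proof. unfold tent. rewrite supn_self. unfold Rdiv. rewrite Rmult_0_l, Rminus_0_r. apply Rmax_right; lra. Qed.

Lemma Rmax0_lip a b : Rabs (Rmax 0 a - Rmax 0 b) <= Rabs (a - b).
Proof. unfold Rmax. repeat destruct Rle_dec; unfold Rabs; repeat destruct Rcase_abs; lra. Qed.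

Lemma tent_lip c r x y : 0 < r -> Rabs (tent c r x - tent c r y) <= supn x y / r.
Proof.
  intros Hr. unfold tent. eapply Rle_trans; [apply Rmax0_lip|].
  replace (1 - supn x c / r - (1 - supn y c / r)) with ((supn y c - supn x c) / r) by (field; lra).
  unfold Rdiv. rewrite Rabs_mult, (Rabs_pos_eq (/ r)) by (left; apply Rinv_0_lt_compat; lra).
  apply Rmult_le_compat_r; [left; apply Rinv_0_lt_compat; lra|].
  pose proof (supn_triang y x c). pose proof (supn_triang x y c). rewrite (supn_sym y x) in H.
  unfold Rabs; destruct Rcase_abs; lra.
Qed.

Lemma abs_le_split x a : Rabs x <= a -> -a <= x <= a.
Proof. unfold Rabs; destruct Rcase_abs; intros; lra. Qed.

Section Constr.
Variable slot : nat -> option (pt * nat).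
Variable W : nat -> pt -> Prop.
Variables dp e : R.

Definition sep (v : pt) (s : option (pt * nat)) : R :=
  match s with None => 1 | Some (w, _) => supn v w end.
Fixpoint minsep (v : pt) (k : nat) : R :=
  match k with O => 1 | S k' => Rmin (minsep v k') (sep v (slot k')) end.
Definition cen (k : nat) : pt := match slot k with None => (0,0) | Some (v, _) => v end.
Definition rad (k : nat) : R :=
  match slot k with None => 1 | Some (v, _) => Rmin (dd v / 2) (minsep v k) end.
Definition eta (k : nat) : R := (/2)^(S k) * Rmin (dp * rad k) e.

Definition tm (pi : pt -> R) (u : pt) (k : nat) (x : pt) : R := tent (cen k) (rad k) x * pi u.

Definition target (prev : nat -> pt) (k : nat) : pt :=
  let v := cen k in
  (fst v + psum (fun j => tm fst (prev j) j v) k, snd v + psum (fun j => tm snd (prev j) j v) k).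

Definition choose_disp (prev : nat -> pt) (k : nat) : pt :=
  match slot k with
  | None => (0,0)
  | Some (v, n) =>
    let p := target prev k in
    match excluded_middle_informative (exists w, W n w /\ supn w p <= eta k) with
    | left H => let w := proj1_sig (constructive_indefinite_description _ H) in
                (fst w - fst p, snd w - snd p)
    | right _ => (0,0)
    end
  end.

Fixpoint Dseq (k : nat) : nat -> pt :=
  match k with
  | O => fun _ => (0,0)
  | S k' => fun j => if Nat.ltb j k' then Dseq k' j
                     else if Nat.eqb j k' then choose_disp (Dseq k') k' else (0,0)
  end.

Definition disp (k : nat) : pt := Dseq (S k) k.

Lemma Dseq_spec k j : (j < k)%nat -> Dseq k j = disp j.
Proof.
  induction k; intros H; [lia|]. simpl.
  destruct (Nat.ltb_spec j k).
  - apply IHk; auto.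
  - assert (j = k) by lia. subst. rewrite Nat.eqb_refl. unfold disp. simpl.
    rewrite Nat.ltb_irrefl, Nat.eqb_refl. reflexivity.
Qed.

Lemma disp_eq k : disp k = choose_disp disp k.
Proof.
  unfold disp at 1. simpl. rewrite Nat.ltb_irrefl, Nat.eqb_refl.
  unfold choose_disp. destruct (slot k) as [[v n]|]; auto.
  assert (E : target (Dseq k) k = target disp k).
  { unfold target. f_equal; f_equal; apply psum_ext; intros j Hj; rewrite Dseq_spec; auto. }
  rewrite E. reflexivity.
Qed.

Definition G (pi : pt -> R) (x : pt) : R := Series (fun k => tm pi (disp k) k x).
Definition hmap (x : pt) : pt := (fst x + G fst x, snd x + G snd x).

Hypothesis Hopen : forall k v n, slot k = Some (v, n) -> open_sq v.
Hypothesis Hsep : forall j k v n m, slot j = Some (v, n) -> slot k = Some (v, m) -> j = k.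
Hypothesis Hdp : 0 < dp <= 1.
Hypothesis He : 0 < e.

Lemma minsep_pos v k : (forall j n, (j < k)%nat -> slot j <> Some (v, n)) -> 0 < minsep v k.
Proof.
  induction k; intros H; simpl; [lra|]. apply Rmin_glb_lt.
  - apply IHk; intros; apply H; lia.
  - unfold sep. destruct (slot k) as [[w m]|] eqn:E; [|lra].
    destruct (supn_ge0 v w) as [Hp|Hz]; auto. symmetry in Hz. apply supn_zero in Hz. subst.
    exfalso. eapply H; [|exact E]. lia.
Qed.

Lemma minsep_le v k j : (j < k)%nat -> minsep v k <= sep v (slot j).
Proof.
  induction k; intros H; [lia|]. simpl. destruct (Nat.eq_dec j k).
  - subst. apply Rmin_r.
  - eapply Rle_trans; [apply Rmin_l|]. apply IHk. lia.
Qed.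

Lemma rad_pos k : 0 < rad k.
Proof.
  unfold rad. destruct (slot k) as [[v n]|] eqn:E; [|lra].
  apply Rmin_glb_lt.
  - pose proof (dd_open v (Hopen _ _ _ E)). lra.
  - apply minsep_pos. intros j m Hj Hs. pose proof (Hsep _ _ _ _ _ Hs E). lia.
Qed.

Lemma eta_pos k : 0 < eta k.
Proof.
  unfold eta. apply Rmult_lt_0_compat; [apply pow_lt; lra|].
  apply Rmin_glb_lt; [|lra]. pose proof (rad_pos k). nra.
Qed.

Lemma disp_bound pi k : (pi = fst \/ pi = snd) -> Rabs (pi (disp k)) <= eta k.
Proof.
  intros Hpi. pose proof (eta_pos k).
  rewrite disp_eq. unfold choose_disp. destruct (slot k) as [[v n]|]; 
    [|destruct Hpi; subst; simpl; rewrite Rabs_R0; lra].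
  destruct excluded_middle_informative as [H1|H1]; 
    [|destruct Hpi; subst; simpl; rewrite Rabs_R0; lra].
  destruct (constructive_indefinite_description _ H1) as [w [Hw0 Hw]].
  destruct Hpi; subst.
  - exact (Rle_trans _ _ _ (supn_fst w (target disp k)) Hw).
  - exact (Rle_trans _ _ _ (supn_snd w (target disp k)) Hw).
Qed.

Lemma disp_none k : slot k = None -> disp k = (0,0).
Proof. intros H. rewrite disp_eq. unfold choose_disp. rewrite H. reflexivity. Qed.

Lemma eta_le1 k : eta k <= (/2)^(S k) * (dp * rad k).
Proof. unfold eta. apply Rmult_le_compat_l; [apply pow_le; lra|apply Rmin_l]. Qed.
Lemma eta_le2 k : eta k <= (/2)^(S k) * e.
Proof. unfold eta. apply Rmult_le_compat_l; [apply pow_le; lra|apply Rmin_r]. Qed.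

Lemma tm_small pi k x : (pi = fst \/ pi = snd) -> Rabs (tm pi (disp k) k x) <= e * (/2)^(S k).
Proof.
  intros Hpi. unfold tm. rewrite Rabs_mult. pose proof (tent_range (cen k) (rad k) x (rad_pos k)).
  rewrite (Rabs_pos_eq (tent _ _ _)) by lra. pose proof (disp_bound pi k Hpi). pose proof (eta_le2 k).
  pose proof (Rabs_pos (pi (disp k))). rewrite Rmult_comm. nra.
Qed.

Lemma tm_lip pi k x y : (pi = fst \/ pi = snd) ->
  Rabs (tm pi (disp k) k x - tm pi (disp k) k y) <= dp * supn x y * (/2)^(S k).
Proof.
  intros Hpi. unfold tm. rewrite <- Rmult_minus_distr_r, Rabs_mult.
  pose proof (tent_lip (cen k) (rad k) x y (rad_pos k)).
  pose proof (disp_bound pi k Hpi). pose proof (eta_le1 k). pose proof (rad_pos k).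
  pose proof (Rabs_pos (pi (disp k))). pose proof (Rabs_pos (tent (cen k) (rad k) x - tent (cen k) (rad k) y)).
  eapply Rle_trans. { apply Rmult_le_compat; [auto|auto|exact H|]. eapply Rle_trans; [exact H0|exact H1]. }
  assert (0 <= (/2)^(S k)) by (apply pow_le; lra). pose proof (supn_ge0 x y).
  apply Req_le. field. lra.
Qed.

Lemma tm_far pi u k x : rad k <= supn x (cen k) -> tm pi u k x = 0.
Proof. intros H. unfold tm. rewrite tent_far; [ring|apply rad_pos|auto]. Qed.

Lemma tm_out pi k x : (pi = fst \/ pi = snd) -> ~ open_sq x -> tm pi (disp k) k x = 0.
Proof.
  intros Hpi Hx. destruct (slot k) as [[v n]|] eqn:E.
  - apply tm_far. unfold rad, cen. rewrite E.
    pose proof (not_open_far x v Hx). pose proof (dd_open v (Hopen _ _ _ E)).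
    pose proof (Rmin_l (dd v / 2) (minsep v k)). lra.
  - unfold tm. rewrite disp_none by auto. destruct Hpi; subst; simpl; ring.
Qed.

Lemma tm_dd pi k x : (pi = fst \/ pi = snd) -> open_sq x -> Rabs (tm pi (disp k) k x) <= dd x * (/2)^(S k).
Proof.
  intros Hpi Hx. pose proof (dd_open x Hx).
  assert (0 <= (/2)^(S k)) by (apply pow_le; lra).
  destruct (slot k) as [[v n]|] eqn:E.
  - destruct (Rle_dec (rad k) (supn x (cen k))) as [Hf|Hf].
    + rewrite tm_far by auto. rewrite Rabs_R0. nra.
    + unfold tm. rewrite Rabs_mult. pose proof (tent_range (cen k) (rad k) x (rad_pos k)).
      rewrite (Rabs_pos_eq (tent _ _ _)) by lra.
      pose proof (disp_bound pi k Hpi). pose proof (eta_le1 k). pose proof (rad_pos k).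
      pose proof (Rabs_pos (pi (disp k))).
      assert (rad k <= dd x).
      { unfold rad, cen in *. rewrite E in *. pose proof (dd_lip x v).
        pose proof (Rmin_l (dd v / 2) (minsep v k)). lra. }
      assert (Rabs (pi (disp k)) <= dd x * (/2)^(S k)).
      { eapply Rle_trans; [exact H2|]. eapply Rle_trans; [exact H3|].
        rewrite (Rmult_comm (dd x)). apply Rmult_le_compat_l; auto. nra. }
      nra.
  - unfold tm. rewrite disp_none by auto. replace (pi (0,0)) with 0 by (destruct Hpi; subst; reflexivity). rewrite Rmult_0_r, Rabs_R0. apply Rmult_le_pos; lra.
Qed.

Lemma tm_later pi k j v n : (pi = fst \/ pi = snd) -> slot k = Some (v, n) -> (k < j)%nat ->
  tm pi (disp j) j v = 0.
Proof.
  intros Hpi Hk Hj. destruct (slot j) as [[w m]|] eqn:E.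
  - apply tm_far. unfold rad, cen. rewrite E.
    pose proof (minsep_le w j k Hj). unfold sep in H. rewrite Hk in H.
    pose proof (Rmin_r (dd w / 2) (minsep w j)). rewrite supn_sym. lra.
  - unfold tm. rewrite disp_none by auto. destruct Hpi; subst; simpl; ring.
Qed.

Lemma tm_self pi k v n : slot k = Some (v, n) -> tm pi (disp k) k v = pi (disp k).
Proof. intros E. unfold tm, cen. rewrite E, tent_center. ring. Qed.

Lemma G_ex pi x : (pi = fst \/ pi = snd) -> ex_series (fun k => tm pi (disp k) k x).
Proof. intros Hpi. apply (ser_bound _ e); [lra|]. intros; apply tm_small; auto. Qed.

Lemma G_small pi x : (pi = fst \/ pi = snd) -> Rabs (G pi x) <= e.
Proof. intros Hpi. apply (ser_bound _ e); [lra|]. intros; apply tm_small; auto. Qed.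

Lemma G_lip pi x y : (pi = fst \/ pi = snd) -> Rabs (G pi x - G pi y) <= dp * supn x y.
Proof.
  intros Hpi. unfold G. rewrite <- Series_minus by (apply G_ex; auto).
  apply ser_bound. { pose proof (supn_ge0 x y). nra. }
  intros; apply tm_lip; auto.
Qed.

Lemma G_dd pi x : (pi = fst \/ pi = snd) -> open_sq x -> Rabs (G pi x) <= dd x.
Proof.
  intros Hpi Hx. apply ser_bound. { pose proof (dd_open x Hx). lra. }
  intros; apply tm_dd; auto.
Qed.

Lemma G_out pi x : (pi = fst \/ pi = snd) -> ~ open_sq x -> G pi x = 0.
Proof.
  intros Hpi Hx. assert (Rabs (G pi x) <= 0).
  { apply ser_bound; [lra|]. intros. rewrite tm_out by auto. rewrite Rabs_R0. lra. }
  pose proof (Rabs_pos (G pi x)). apply Rabs_eq_0. lra.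
Qed.

Lemma G_at pi k v n : (pi = fst \/ pi = snd) -> slot k = Some (v, n) ->
  G pi v = psum (fun j => tm pi (disp j) j v) k + pi (disp k).
Proof.
  intros Hpi E. unfold G. rewrite (psum_series _ k).
  - simpl. rewrite (tm_self pi k v n E). reflexivity.
  - intros j Hj. eapply tm_later; eauto.
Qed.

Lemma hmap_W k v n : slot k = Some (v, n) -> dense_in_sq (W n) -> W n (hmap v).
Proof.
  intros E Hd.
  assert (Hc : cen k = v) by (unfold cen; rewrite E; reflexivity).
  set (p := target disp k).
  assert (Hp : forall pi, (pi = fst \/ pi = snd) -> Rabs (pi p - pi v) <= dd v).
  { intros pi Hpi. pose proof (dd_open v (Hopen _ _ _ E)).
    assert (Rabs (psum (fun j => tm pi (disp j) j v) k) <= dd v).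
    { eapply Rle_trans; [apply psum_bound with (M := dd v); [lra|]|].
      - intros j. apply tm_dd; auto. apply (Hopen _ _ _ E).
      - assert (0 < (/2)^k) by (apply pow_lt; lra). nra. }
    unfold p, target. rewrite Hc. destruct Hpi; subst; simpl;
      match goal with |- Rabs ?a <= _ => match type of H0 with Rabs ?b <= _ => replace a with b by ring end end; auto. }
  assert (Hpc : closed_sq p).
  { pose proof (Hp fst (or_introl eq_refl)). pose proof (Hp snd (or_intror eq_refl)).
    pose proof (Rabs_triang_inv (fst p) (fst v)). pose proof (Rabs_triang_inv (snd p) (snd v)).
    pose proof (Rabs_triang (fst p - fst v) (fst v)). pose proof (Rabs_triang (snd p - snd v) (snd v)).
    replace (fst p - fst v + fst v) with (fst p) in H3 by ring.
    replace (snd p - snd v + snd v) with (snd p) in H4 by ring.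
    unfold dd in *. pose proof (Rmin_l (1 - Rabs (fst v)) (1 - Rabs (snd v))).
    pose proof (Rmin_r (1 - Rabs (fst v)) (1 - Rabs (snd v))).
    unfold closed_sq. split; apply abs_le_split; lra. }
  assert (Hex : exists w, W n w /\ supn w p <= eta k).
  { destruct (Hd p Hpc (eta k) (eta_pos k)) as [w [Hw1 Hw2]]. exists w. split; auto.
    left. eapply Rle_lt_trans; [apply supn_dist|exact Hw2]. }
  assert (Hdk : disp k = (fst (proj1_sig (constructive_indefinite_description _ Hex)) - fst p,
                          snd (proj1_sig (constructive_indefinite_description _ Hex)) - snd p)).
  { rewrite disp_eq. unfold choose_disp. rewrite E. fold p.
    destruct excluded_middle_informative as [H1|H1]; [|contradiction].
    replace H1 with Hex by apply ProofIrrelevance.proof_irrelevance. reflexivity. }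
  destruct (constructive_indefinite_description _ Hex) as [w [Hw Hw']]. simpl in Hdk.
  replace (hmap v) with w; auto.
  unfold hmap. rewrite (G_at fst k v n), (G_at snd k v n); auto. rewrite Hdk. simpl.
  unfold p, target in *. rewrite Hc. simpl. destruct w. simpl. f_equal; ring.
Qed.

End Constr.

Lemma sq_le_of_abs g c : Rabs g <= c -> g^2 <= c^2.
Proof. intros H. apply abs_le_split in H. nra. Qed.

Theorem lemma3p4 (V W : nat -> pt -> Prop) :
  (forall n x, V n x -> open_sq x) ->
  (forall n, countable_set (V n)) ->
  pairwise_disjoint V ->
  (forall n x, W n x -> open_sq x) ->
  pairwise_disjoint W ->
  (forall n, dense_in_sq (V n)) ->
  (forall n, dense_in_sq (W n)) ->
  forall lam eps : R, 1 < lam -> 0 < eps ->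
  exists h : pt -> pt,
    lambda_homeo_sq lam h /\
    (forall x, bd_sq x -> h x = x) /\
    (forall x, closed_sq x -> dist2 (h x) x < eps) /\
    (forall n x, V n x -> W n (h x)).
Proof.
  intros HVo HVc HVd HWo HWd HVdense HWdense lam eps Hlam Heps.
  set (F := fun n => proj1_sig (constructive_indefinite_description _ (HVc n))).
  assert (HF : forall n x y, V n x -> V n y -> F n x = F n y -> x = y).
  { intros n. unfold F. destruct (constructive_indefinite_description _ (HVc n)) as [f Hf]. exact Hf. }
  set (slot := fun k =>
     match excluded_middle_informative (exists x, V (fst (of_nat k)) x /\ F (fst (of_nat k)) x = snd (of_nat k)) with
     | left H => Some (proj1_sig (constructive_indefinite_description _ H), fst (of_nat k))
     | right _ => None end).
  assert (Hslot : forall k v n, slot k = Some (v,n) -> V n v /\ of_nat k = (n, F n v)).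
  { intros k v n. unfold slot. destruct excluded_middle_informative as [H|H]; [|discriminate].
    destruct (constructive_indefinite_description _ H) as [x [Hx1 Hx2]]. simpl. intros E; inversion E; subst.
    split; auto. rewrite Hx2. destruct (of_nat k); reflexivity. }
  assert (Hslot2 : forall n v, V n v -> slot (to_nat (n, F n v)) = Some (v, n)).
  { intros n v Hv. unfold slot. rewrite cancel_of_to. simpl. destruct excluded_middle_informative as [H1|H1].
    - destruct (constructive_indefinite_description _ H1) as [x [Hx1 Hx2]]. simpl. f_equal. f_equal.
      apply (HF n); auto.
    - exfalso; apply H1; exists v; auto. }
  assert (Hopen : forall k v n, slot k = Some (v, n) -> open_sq v).
  { intros k v n E. apply (HVo n). apply (Hslot _ _ _ E). }
  assert (Hsep : forall j k v n m, slot j = Some (v, n) -> slot k = Some (v, m) -> j = k).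
  { intros j k v n m Ej Ek. destruct (Hslot _ _ _ Ej) as [Hv1 Hj]. destruct (Hslot _ _ _ Ek) as [Hv2 Hk].
    destruct (Nat.eq_dec n m) as [->|Hne]; [|exfalso; exact (HVd n m Hne v Hv1 Hv2)].
    rewrite <- (cancel_to_of j), <- (cancel_to_of k), Hj, Hk. reflexivity. }
  set (dp := (lam - 1) / (4 * lam)).
  set (e := eps / 4).
  assert (Hdp : 0 < dp <= 1).
  { unfold dp. split. apply Rdiv_lt_0_compat; lra.
    apply Rmult_le_reg_r with (4 * lam); [lra|]. unfold Rdiv. rewrite Rmult_assoc, Rinv_l; lra. }
  assert (Hdp4 : 4 * lam * dp = lam - 1) by (unfold dp; field; lra).
  assert (He : 0 < e) by (unfold e; lra).
  set (h := hmap slot W dp e).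
  set (G1 := G slot W dp e fst). set (G2 := G slot W dp e snd).
  assert (Hh : forall x, h x = (fst x + G1 x, snd x + G2 x)) by reflexivity.
  assert (L1 : forall x y, Rabs (G1 x - G1 y) <= dp * supn x y).
  { intros; unfold G1; eapply G_lip; eauto. }
  assert (L2 : forall x y, Rabs (G2 x - G2 y) <= dp * supn x y).
  { intros; unfold G2; eapply G_lip; eauto. }
  assert (O1 : forall x, ~ open_sq x -> G1 x = 0).
  { intros; unfold G1; eapply G_out; eauto. }
  assert (O2 : forall x, ~ open_sq x -> G2 x = 0).
  { intros; unfold G2; eapply G_out; eauto. }
  assert (D1 : forall x, open_sq x -> Rabs (G1 x) <= dd x).
  { intros; unfold G1; eapply G_dd; eauto. }
  assert (D2 : forall x, open_sq x -> Rabs (G2 x) <= dd x).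
  { intros; unfold G2; eapply G_dd; eauto. }
  assert (S1 : forall x, Rabs (G1 x) <= e).
  { intros; unfold G1; eapply G_small; eauto. }
  assert (S2 : forall x, Rabs (G2 x) <= e).
  { intros; unfold G2; eapply G_small; eauto. }
  assert (Hfix : forall x, ~ open_sq x -> h x = x).
  { intros x Hx. rewrite Hh, O1, O2 by auto. destruct x; simpl; f_equal; ring. }
  assert (Hopcl : forall x, open_sq x -> closed_sq x).
  { unfold open_sq, closed_sq. intros x [[? ?] [? ?]]. lra. }
  exists h. split; [|split; [|split]].
  -
    split; [|split; [|split]].
    + intros x Hx. destruct (classic (open_sq x)) as [Ho|Ho]; [|rewrite Hfix; auto].
      rewrite Hh. pose proof (D1 x Ho). pose proof (D2 x Ho). unfold dd in *.
      pose proof (Rmin_l (1 - Rabs (fst x)) (1 - Rabs (snd x))).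
      pose proof (Rmin_r (1 - Rabs (fst x)) (1 - Rabs (snd x))).
      pose proof (Rabs_triang (fst x) (G1 x)). pose proof (Rabs_triang (snd x) (G2 x)).
      unfold closed_sq; simpl. split; apply abs_le_split; lra.
    + intros x y _ _ Hxy. rewrite !Hh in Hxy. injection Hxy as E1 E2.
      assert (Rabs (fst x - fst y) <= dp * supn x y).
      { replace (fst x - fst y) with (G1 y - G1 x) by lra. rewrite supn_sym. apply L1. }
      assert (Rabs (snd x - snd y) <= dp * supn x y).
      { replace (snd x - snd y) with (G2 y - G2 x) by lra. rewrite supn_sym. apply L2. }
      assert (supn x y <= dp * supn x y) by (apply Rmax_lub; auto).
      pose proof (supn_ge0 x y). apply supn_zero. 
      assert (dp < 1) by (unfold dp; apply Rmult_lt_reg_r with (4*lam); [lra|]; unfold Rdiv; rewrite Rmult_assoc, Rinv_l; lra).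
      nra.
    + intros y Hy.
      destruct (fixpt (fun z => (fst y - G1 z, snd y - G2 z))) as [z Hz].
      { intros a b. unfold supn at 1; simpl. pose proof (supn_ge0 a b).
        assert (dp <= /2) by (unfold dp; apply Rmult_le_reg_r with (4*lam); [lra|]; unfold Rdiv; rewrite Rmult_assoc, Rinv_l; lra).
        apply Rmax_lub.
        - replace (fst y - G1 a - (fst y - G1 b)) with (-(G1 a - G1 b)) by ring. rewrite Rabs_Ropp.
          eapply Rle_trans; [apply L1|]. nra.
        - replace (snd y - G2 a - (snd y - G2 b)) with (-(G2 a - G2 b)) by ring. rewrite Rabs_Ropp.
          eapply Rle_trans; [apply L2|]. nra. }
      assert (Hzy : h z = y).
      { rewrite Hh. destruct z as [z1 z2]. injection Hz as E1 E2. destruct y; simpl in *. f_equal; lra. }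
      exists z. split; auto.
      destruct (classic (open_sq z)) as [Ho|Ho]; auto.
      rewrite Hfix in Hzy by auto. subst; auto.
    + intros x y _ _.
      set (a := (fst x + G1 y, snd x + G2 y)).
      set (D := dist2 x y).
      assert (HD : 0 <= D) by apply sqrt_pos.
      assert (Ha1 : dist2 a (h y) = D).
      { unfold D, dist2, a. rewrite Hh. simpl. f_equal. ring. }
      assert (Ha2 : dist2 (h x) a <= 2 * dp * D).
      { unfold dist2, a. rewrite Hh. simpl.
        replace (fst x + G1 x - (fst x + G1 y)) with (G1 x - G1 y) by ring.
        replace (snd x + G2 x - (snd x + G2 y)) with (G2 x - G2 y) by ring.
        pose proof (supn_dist x y). fold D in H.
        assert (Rabs (G1 x - G1 y) <= dp * D) by (eapply Rle_trans; [apply L1|]; apply Rmult_le_compat_l; lra).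
        assert (Rabs (G2 x - G2 y) <= dp * D) by (eapply Rle_trans; [apply L2|]; apply Rmult_le_compat_l; lra).
        apply sq_le_of_abs in H0. apply sq_le_of_abs in H1.
        rewrite <- (sqrt_pow2 (2 * dp * D)) by nra. apply sqrt_le_1_alt. nra. }
      pose proof (dist2_triang (h x) a (h y)). pose proof (dist2_triang a (h x) (h y)).
      rewrite (dist2_sym a (h x)) in H0. fold D.
      split.
      * assert (D / lam <= (1 - 2 * dp) * D).
        { apply Rmult_le_reg_r with lam; [lra|]. unfold Rdiv. rewrite Rmult_assoc, Rinv_l by lra.
          nra. }
        lra.
      * nra.
  - intros x [_ Hx]. apply Hfix; auto.
  - intros x _. rewrite Hh. unfold dist2. simpl.
    replace (fst x + G1 x - fst x) with (G1 x) by ring.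
    replace (snd x + G2 x - snd x) with (G2 x) by ring.
    pose proof (sq_le_of_abs _ _ (S1 x)). pose proof (sq_le_of_abs _ _ (S2 x)).
    rewrite <- (sqrt_pow2 eps) by lra. apply sqrt_lt_1_alt. unfold e in *. split; nra.
  - intros n x Hx. unfold h. eapply hmap_W; eauto.
Qed.
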